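(* Let $n,p_1,p_2\ge 1$, $p=p_1+p_2$, let $(A_k)_{k\ge 0}$ be a sequence of real $n\times n$ matrices, $C_1\in\mathbb{R}^{p_1\times n}$, $C_2\in\mathbb{R}^{p_2\times n}$, $C=\begin{pmatrix}C_1\\ C_2\end{pmatrix}$, $Q=Q^T>0$ ($n\times n$), and $R=R^T=\begin{pmatrix}R_{11}&R_{12}\\ R_{21}&R_{22}\end{pmatrix}>0$ ($p\times p$, with $R_{11}$ of size $p_1\times p_1$, $R_{22}$ of size $p_2\times p_2$). Fix $\lambda_1,\lambda_2\in[0,1]$. For $X=X^T\ge 0$ define $$g_{\lambda_1\lambda_2}(k,X)=A_kXA_k^T+Q-\lambda_1\lambda_2A_kXC^T(CXC^T+R)^{-1}CXA_k^T-\lambda_1(1-\lambda_2)A_kXC_1^T(C_1XC_1^T+R_{11})^{-1}C_1XA_k^T-(1-\lambda_1)\lambda_2A_kXC_2^T(C_2XC_2^T+R_{22})^{-1}C_2XA_k^T,$$ and for matrices $K\in\mathbb{R}^{n\times p}$, $K_1\in\mathbb{R}^{n\times p_1}$, $K_2\in\mathbb{R}^{n\times p_2}$ define $$\phi(k,K,K_1,K_2,X)=(1-\lambda_1)(1-\lambda_2)(A_kXA_k^T+Q)+\lambda_1\lambda_2\big((A_k+KC)X(A_k+KC)^T+Q+KRK^T\big)$$ $$+\lambda_1(1-\lambda_2)\big((A_k+K_1C_1)X(A_k+K_1C_1)^T+Q+K_1R_{11}K_1^T\big)+(1-\lambda_1)\lambda_2\big((A_k+K_2C_2)X(A_k+K_2C_2)^T+Q+K_2R_{22}K_2^T\big).$$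 Suppose there exist matrices $K_k\in\mathbb{R}^{n\times p}$, $K_{k,1}\in\mathbb{R}^{n\times p_1}$, $K_{k,2}\in\mathbb{R}^{n\times p_2}$ ($k\ge 0$) and a symmetric matrix $\bar P>0$ such that $\bar P>\phi(k,K_k,K_{k,1},K_{k,2},\bar P)$ for all $k\ge 0$. Then for every symmetric $P_0\ge 0$, the sequence defined by $P_{k+1}=g_{\lambda_1\lambda_2}(k,P_k)$ is bounded.
   Context: All matrix inequalities are in the Loewner (positive semidefinite) order: $M>N$ means $M-N$ is positive definite, $M\ge N$ means $M-N$ is positive semidefinite. The recursion $P_{k+1}=g_{\lambda_1\lambda_2}(k,P_k)$ is the covariance recursion of an extended Kalman filter whose two measurement channels (outputs $C_1x$, $C_2x$) deliver measurements with probabilities $\lambda_1,\lambda_2$, with $A_k$ the Jacobian of the dynamics at step $k$. *)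

(* Defs.v *)
From HB Require Import structures.
From mathcomp Require Import all_boot all_order all_algebra.
From mathcomp Require Import reals.
Set Implicit Arguments. Unset Strict Implicit. Unset Printing Implicit Defensive.
Import Order.TTheory GRing.Theory Num.Theory.
Local Open Scope ring_scope.

Definition psdmx (R : realType) (n : nat) (M : 'M[R]_n) : Prop :=
  M^T = M /\ forall x : 'cV[R]_n, 0 <= (x^T *m M *m x) 0 0.

Definition pdmx (R : realType) (n : nat) (M : 'M[R]_n) : Prop :=
  M^T = M /\ forall x : 'cV[R]_n, x != 0 -> 0 < (x^T *m M *m x) 0 0.

Definition loewner_gt (R : realType) (n : nat) (M N : 'M[R]_n) : Prop :=
  pdmx (M - N).

Definition gEKF (R : realType) (n p1 p2 : nat) (A : nat -> 'M[R]_n)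
  (C1 : 'M[R]_(p1, n)) (C2 : 'M[R]_(p2, n)) (Q : 'M[R]_n)
  (Rm : 'M[R]_(p1 + p2)) (l1 l2 : R) (k : nat) (X : 'M[R]_n) : 'M[R]_n :=
  let Ak := A k in
  let C := col_mx C1 C2 in
  Ak *m X *m Ak^T + Q
  - (l1 * l2) *: (Ak *m X *m C^T *m invmx (C *m X *m C^T + Rm) *m C *m X *m Ak^T)
  - (l1 * (1 - l2)) *: (Ak *m X *m C1^T *m invmx (C1 *m X *m C1^T + ulsubmx Rm)
                          *m C1 *m X *m Ak^T)
  - ((1 - l1) * l2) *: (Ak *m X *m C2^T *m invmx (C2 *m X *m C2^T + drsubmx Rm)
                          *m C2 *m X *m Ak^T).

Definition phiEKF (R : realType) (n p1 p2 : nat) (A : nat -> 'M[R]_n)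
  (C1 : 'M[R]_(p1, n)) (C2 : 'M[R]_(p2, n)) (Q : 'M[R]_n)
  (Rm : 'M[R]_(p1 + p2)) (l1 l2 : R) (k : nat)
  (K : 'M[R]_(n, p1 + p2)) (K1 : 'M[R]_(n, p1)) (K2 : 'M[R]_(n, p2))
  (X : 'M[R]_n) : 'M[R]_n :=
  let Ak := A k in
  let C := col_mx C1 C2 in
  ((1 - l1) * (1 - l2)) *: (Ak *m X *m Ak^T + Q)
  + (l1 * l2) *: ((Ak + K *m C) *m X *m (Ak + K *m C)^T + Q + K *m Rm *m K^T)
  + (l1 * (1 - l2)) *: ((Ak + K1 *m C1) *m X *m (Ak + K1 *m C1)^T + Q
                         + K1 *m ulsubmx Rm *m K1^T)
  + ((1 - l1) * l2) *: ((Ak + K2 *m C2) *m X *m (Ak + K2 *m C2)^T + Q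
                         + K2 *m drsubmx Rm *m K2^T).

(* Main.v *)
Require Import Defs.
From HB Require Import structures.
From mathcomp Require Import all_boot all_order all_algebra.
From mathcomp Require Import reals.
From mathcomp Require Import ring lra.
Import Order.TTheory GRing.Theory Num.Theory.
Set Implicit Arguments. Unset Strict Implicit. Unset Printing Implicit Defensive.
Local Open Scope ring_scope.
Section Q.
Variable R : realType.

Definition bf n (M : 'M[R]_n) (x y : 'cV[R]_n) : R := (x^T *m M *m y) 0 0.
Definition qf n (M : 'M[R]_n) (x : 'cV[R]_n) : R := bf M x x.

Lemma bfDm n (M N : 'M[R]_n) x y : bf (M + N) x y = bf M x y + bf N x y.
Proof. by rewrite /bf mulmxDr mulmxDl mxE. Qed.
Lemma bfNm n (M : 'M[R]_n) x y : bf (- M) x y = - bf M x y.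
Proof. by rewrite /bf mulmxN mulNmx mxE. Qed.
Lemma bfZm n (a : R) (M : 'M[R]_n) x y : bf (a *: M) x y = a * bf M x y.
Proof. by rewrite /bf -scalemxAr -scalemxAl mxE. Qed.
Lemma bfDl n (M : 'M[R]_n) x z y : bf M (x + z) y = bf M x y + bf M z y.
Proof. by rewrite /bf linearD /= !mulmxDl mxE. Qed.
Lemma bfDr n (M : 'M[R]_n) x z y : bf M y (x + z) = bf M y x + bf M y z.
Proof. by rewrite /bf mulmxDr mxE. Qed.
Lemma bfZl n (M : 'M[R]_n) a x y : bf M (a *: x) y = a * bf M x y.
Proof. by rewrite /bf linearZ /= -!scalemxAl mxE. Qed.
Lemma bfZr n (M : 'M[R]_n) a x y : bf M y (a *: x) = a * bf M y x.
Proof. by rewrite /bf -!scalemxAr mxE. Qed.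
Lemma bfC n (M : 'M[R]_n) x y : M^T = M -> bf M x y = bf M y x.
Proof.
move=> hM; rewrite /bf -[in LHS](trmxK (x^T *m M *m y)) mxE.
by rewrite !trmx_mul hM trmxK mulmxA.
Qed.
Lemma qfDm n (M N : 'M[R]_n) x : qf (M + N) x = qf M x + qf N x.
Proof. exact: bfDm. Qed.
Lemma qfNm n (M : 'M[R]_n) x : qf (- M) x = - qf M x.
Proof. exact: bfNm. Qed.
Lemma qfBm n (M N : 'M[R]_n) x : qf (M - N) x = qf M x - qf N x.
Proof. by rewrite qfDm qfNm. Qed.
Lemma qfZm n a (M : 'M[R]_n) x : qf (a *: M) x = a * qf M x.
Proof. exact: bfZm. Qed.
Lemma qf_conj n m (Y : 'M[R]_(n, m)) (M : 'M[R]_m) x :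
  qf (Y *m M *m Y^T) x = qf M (Y^T *m x).
Proof. by rewrite /qf /bf trmx_mul trmxK !mulmxA. Qed.
Lemma qf0 n (M : 'M[R]_n) : qf M 0 = 0.
Proof. by rewrite /qf /bf mulmx0 mxE. Qed.

Lemma bf_delta n (M : 'M[R]_n) i j : bf M (delta_mx i 0) (delta_mx j 0) = M i j.
Proof.
rewrite /bf trmx_delta -rowE -colE !mxE.
by [].
Qed.

End Q.
Lemma zmod6 (V : zmodType) (a b c d e f : V) : a + b + (c + d) + e = a - f + ((d + e) + c + (b + f)).
Proof.
rewrite (addrC b f) !addrA. rewrite -(addrA a (-f) d). rewrite (addrC (-f) d). rewrite !addrA.
rewrite -(addrA _ (-f) e) (addrC (-f) e) addrA.
rewrite -(addrA _ (-f) c) (addrC (-f) c) addrA.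
rewrite subrK.
by rewrite (addrAC (a+d+e) c b) (addrAC (a+d) e b) (addrAC a d b) (addrAC (a+b+d) e c) (addrAC (a+b) d c).
Qed.

Section K.
Variable R : realType.
Lemma key n m (A X : 'M[R]_n) (Cm : 'M_(m,n)) (Rc : 'M_m) (K : 'M_(n,m)) (S : 'M_m) :
  S = Cm *m X *m Cm^T + Rc -> S \in unitmx ->
  (A + K *m Cm) *m X *m (A + K *m Cm)^T + K *m Rc *m K^T =
  A *m X *m A^T - A *m X *m Cm^T *m invmx S *m Cm *m X *m A^T
  + (K + A *m X *m Cm^T *m invmx S) *m S *m (K + (invmx S *m Cm *m X *m A^T)^T)^T.
Proof.
move=> hS hu.
rewrite !linearD /= !trmxK !trmx_mul ?mulmxDl ?mulmxDr !mulmxA.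
rewrite !(mulmxKV hu) !(mulmxK hu).
rewrite hS ?mulmxDl ?mulmxDr !mulmxA mulmxDl.
exact: zmod6.
Qed.
Lemma pd_unit n (M : 'M[R]_n) : (forall x, x != 0 -> 0 < qf M x) -> M \in unitmx.
Proof.
move=> h; rewrite unitmxE unitfE; apply/negP => /det0P [v vn0 vM].
have : v^T != 0 by rewrite -(inj_eq (@trmx_inj _ _ _)) trmxK trmx0.
move=> /h; rewrite /qf /bf trmxK vM mul0mx mxE ltxx //.
Qed.

Lemma S_props n m (X : 'M[R]_n) (Cm : 'M[R]_(m,n)) (Rc : 'M[R]_m) :
  X^T = X -> (forall x, 0 <= qf X x) -> Rc^T = Rc -> (forall x, x != 0 -> 0 < qf Rc x) ->
  let S := Cm *m X *m Cm^T + Rc in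
  [/\ S^T = S, S \in unitmx & forall y, y != 0 -> 0 < qf S y].
Proof.
move=> hX hXp hR hRp S.
have hp : forall y, y != 0 -> 0 < qf S y.
  by move=> x x0; rewrite /S qfDm qf_conj; apply: ltr_wpDl => //; apply: hRp.
split => //.
  by rewrite /S linearD /= !trmx_mul trmxK hX hR mulmxA.
exact: pd_unit.
Qed.

Lemma opt_props n m (A X : 'M[R]_n) (Cm : 'M[R]_(m,n)) (Rc : 'M[R]_m) :
  X^T = X -> (forall x, 0 <= qf X x) -> Rc^T = Rc -> (forall x, x != 0 -> 0 < qf Rc x) ->
  let S := Cm *m X *m Cm^T + Rc in
  let T := A *m X *m Cm^T *m invmx S *m Cm *m X *m A^T in
  [/\ T^T = T, (forall x, 0 <= qf (A *m X *m A^T - T) x) &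
     (forall K x, qf (A *m X *m A^T - T) x <=
        qf ((A + K *m Cm) *m X *m (A + K *m Cm)^T + K *m Rc *m K^T) x)].
Proof.
move=> hX hXp hR hRp S T.
have [hST hSu hSp] := S_props Cm hX hXp hR hRp.
have hV : (invmx S *m Cm *m X *m A^T)^T = A *m X *m Cm^T *m invmx S.
  by rewrite !trmx_mul trmxK trmx_inv hST hX !mulmxA.
have hk K := key A K (erefl S) hSu.
rewrite hV in hk.
split.
- by rewrite /T !trmx_mul !trmxK trmx_inv hST hX !mulmxA.
- move=> x; have := hk (- (A *m X *m Cm^T *m invmx S)).
  rewrite addNr mul0mx mul0mx addr0 -/T => <-.
  rewrite qfDm !qf_conj; apply: addr_ge0; first exact: hXp.
  have [->|x0] := eqVneq ((- (A *m X *m Cm^T *m invmx S))^T *m x) 0; first by rewrite qf0.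
  by apply: ltW; apply: hRp.
- move=> K x; rewrite hk -/T [in X in _ <= X]qfDm [in X in _ <= X]qf_conj lerDl.
  have [->|x0] := eqVneq ((K + A *m X *m Cm^T *m invmx S)^T *m x) 0; first by rewrite qf0.
  by apply: ltW; apply: hSp.
Qed.

End K.
Section M.
Variable R : realType.

Lemma ul_pd p1 p2 (Rm : 'M[R]_(p1 + p2)) : Rm^T = Rm -> (forall x, x != 0 -> 0 < qf Rm x) ->
  (ulsubmx Rm)^T = ulsubmx Rm /\ (forall y, y != 0 -> 0 < qf (ulsubmx Rm) y).
Proof.
move=> hs hp; split; first by rewrite trmx_ulsub hs.
move=> y y0.
have -> : qf (ulsubmx Rm) y = qf Rm (col_mx y 0).
  rewrite /qf /bf -{2}[Rm]submxK tr_col_mx mul_row_block mul_row_col trmx0.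
  by rewrite !mul0mx !mulmx0 !addr0.
by apply: hp; rewrite col_mx_eq0 negb_and y0.
Qed.

Lemma dr_pd p1 p2 (Rm : 'M[R]_(p1 + p2)) : Rm^T = Rm -> (forall x, x != 0 -> 0 < qf Rm x) ->
  (drsubmx Rm)^T = drsubmx Rm /\ (forall y, y != 0 -> 0 < qf (drsubmx Rm) y).
Proof.
move=> hs hp; split; first by rewrite trmx_drsub hs.
move=> y y0.
have -> : qf (drsubmx Rm) y = qf Rm (col_mx 0 y).
  rewrite /qf /bf -{2}[Rm]submxK tr_col_mx mul_row_block mul_row_col trmx0.
  by rewrite !mul0mx !mulmx0 !add0r.
by apply: hp; rewrite col_mx_eq0 negb_and y0 orbT.
Qed.

Lemma pd_psd n (M : 'M[R]_n) : (forall x, x != 0 -> 0 < qf M x) -> forall x, 0 <= qf M x.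
Proof. move=> h x; have [->|x0] := eqVneq x 0; [by rewrite qf0 | exact/ltW/h]. Qed.

Lemma phi_qf n p1 p2 (A : nat -> 'M[R]_n) (C1 : 'M[R]_(p1, n)) (C2 : 'M[R]_(p2, n))
  (Q : 'M[R]_n) (Rm : 'M[R]_(p1 + p2)) l1 l2 k K K1 K2 X x :
 qf (phiEKF A C1 C2 Q Rm l1 l2 k K K1 K2 X) x =
 ((1 - l1) * (1 - l2)) * (qf X ((A k)^T *m x) + qf Q x)
 + (l1 * l2) * (qf X ((A k + K *m col_mx C1 C2)^T *m x) + qf Q x + qf Rm (K^T *m x))
 + (l1 * (1 - l2)) * (qf X ((A k + K1 *m C1)^T *m x) + qf Q x + qf (ulsubmx Rm) (K1^T *m x))
 + ((1 - l1) * l2) * (qf X ((A k + K2 *m C2)^T *m x) + qf Q x + qf (drsubmx Rm) (K2^T *m x)).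
Proof. rewrite /phiEKF !qfDm !qfZm. rewrite !(qfDm (n:=n)).
by rewrite ?(qf_conj (m:=n)) ?(qf_conj (m:=(p1+p2)%N)) ?(qf_conj (m:=p1)) ?(qf_conj (m:=p2)). Qed.

Lemma g_qf n p1 p2 (A : nat -> 'M[R]_n) (C1 : 'M[R]_(p1, n)) (C2 : 'M[R]_(p2, n))
  (Q : 'M[R]_n) (Rm : 'M[R]_(p1 + p2)) l1 l2 k X x :
 let C := col_mx C1 C2 in
 qf (gEKF A C1 C2 Q Rm l1 l2 k X) x =
 qf (A k *m X *m (A k)^T) x + qf Q x
 - (l1 * l2) * qf (A k *m X *m C^T *m invmx (C *m X *m C^T + Rm) *m C *m X *m (A k)^T) x
 - (l1 * (1 - l2)) * qf (A k *m X *m C1^T *m invmx (C1 *m X *m C1^T + ulsubmx Rm)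
                          *m C1 *m X *m (A k)^T) x
 - ((1 - l1) * l2) * qf (A k *m X *m C2^T *m invmx (C2 *m X *m C2^T + drsubmx Rm)
                          *m C2 *m X *m (A k)^T) x.
Proof. by rewrite /gEKF !qfBm qfDm !qfZm. Qed.


Lemma g_bounds n p1 p2 (A : nat -> 'M[R]_n) (C1 : 'M[R]_(p1, n)) (C2 : 'M[R]_(p2, n))
  (Q : 'M[R]_n) (Rm : 'M[R]_(p1 + p2)) l1 l2 k X :
  Q^T = Q -> (forall x, 0 <= qf Q x) -> Rm^T = Rm -> (forall x, x != 0 -> 0 < qf Rm x) ->
  0 <= l1 <= 1 -> 0 <= l2 <= 1 -> X^T = X -> (forall x, 0 <= qf X x) ->
  [/\ (gEKF A C1 C2 Q Rm l1 l2 k X)^T = gEKF A C1 C2 Q Rm l1 l2 k X,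
      (forall x, 0 <= qf (gEKF A C1 C2 Q Rm l1 l2 k X) x) &
      (forall K K1 K2 x, qf (gEKF A C1 C2 Q Rm l1 l2 k X) x <=
                         qf (phiEKF A C1 C2 Q Rm l1 l2 k K K1 K2 X) x)].
Proof.
move=> hQs hQp hRs hRp /andP[l10 l11] /andP[l20 l21] hX hXp.
have [h11s h11p] := ul_pd hRs hRp.
have [h22s h22p] := dr_pd hRs hRp.
have [T0s T0p T0h] := opt_props (A k) (col_mx C1 C2) hX hXp hRs hRp.
have [T1s T1p T1h] := opt_props (A k) C1 hX hXp h11s h11p.
have [T2s T2p T2h] := opt_props (A k) C2 hX hXp h22s h22p.
split.
- rewrite /gEKF !linearB /= !linearZ /= linearD /= T0s T1s T2s hQs.
  by rewrite !trmx_mul trmxK hX mulmxA.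
- move=> x; rewrite g_qf /=.
  have := T0p x; have := T1p x; have := T2p x; rewrite !qfBm.
  have := hQp x.
  set a := qf (A k *m X *m (A k)^T) x.
  set t0 := qf (A k *m X *m (col_mx C1 C2)^T *m _ *m _ *m X *m (A k)^T) x.
  set t1 := qf (A k *m X *m C1^T *m _ *m _ *m X *m (A k)^T) x.
  set t2 := qf (A k *m X *m C2^T *m _ *m _ *m X *m (A k)^T) x.
  move=> q0 e2 e1 e0.
  have ha : 0 <= a by rewrite /a qf_conj.
  have -> : a + qf Q x - l1 * l2 * t0 - l1 * (1 - l2) * t1 - (1 - l1) * l2 * t2 =
     ((1 - l1) * (1 - l2)) * a + (l1 * l2) * (a - t0) + (l1 * (1 - l2)) * (a - t1)
     + ((1 - l1) * l2) * (a - t2) + qf Q x by ring.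
  have w0 : 0 <= 1 - l1 by rewrite subr_ge0.
  have w1 : 0 <= 1 - l2 by rewrite subr_ge0.
  by rewrite !addr_ge0 // !mulr_ge0.
- move=> K K1 K2 x; rewrite g_qf phi_qf /=.
  have := T0h K x; have := T1h K1 x; have := T2h K2 x; rewrite !qfBm.
  rewrite !qfDm ?(qf_conj (m:=n)) ?(qf_conj (m:=(p1+p2)%N)) ?(qf_conj (m:=p1)) ?(qf_conj (m:=p2)).
  set a := qf (A k *m X *m (A k)^T) x.
  set t0 := qf (A k *m X *m (col_mx C1 C2)^T *m _ *m _ *m X *m (A k)^T) x.
  set t1 := qf (A k *m X *m C1^T *m _ *m _ *m X *m (A k)^T) x.
  set t2 := qf (A k *m X *m C2^T *m _ *m _ *m X *m (A k)^T) x.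
  move=> e2 e1 e0.
  have haeq : qf X ((A k)^T *m x) = a by rewrite /a qf_conj.
  rewrite haeq in e0 e1 e2 *.
  rewrite -subr_ge0.
  set f0 := qf X ((A k + K *m col_mx C1 C2)^T *m x).
  set f1 := qf X ((A k + K1 *m C1)^T *m x).
  set f2 := qf X ((A k + K2 *m C2)^T *m x).
  set r0 := qf Rm (K^T *m x).
  set r1 := qf (ulsubmx Rm) (K1^T *m x).
  set r2 := qf (drsubmx Rm) (K2^T *m x).
  set qq := qf Q x.
  have w0 : 0 <= 1 - l1 by rewrite subr_ge0.
  have w1 : 0 <= 1 - l2 by rewrite subr_ge0.
  have -> : (1 - l1) * (1 - l2) * (a + qq) + l1 * l2 * (f0 + qq + r0) +
      l1 * (1 - l2) * (f1 + qq + r1) + (1 - l1) * l2 * (f2 + qq + r2) -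
      (a + qq - l1 * l2 * t0 - l1 * (1 - l2) * t1 - (1 - l1) * l2 * t2) =
      (l1 * l2) * ((f0 + r0) - (a - t0)) + (l1 * (1 - l2)) * ((f1 + r1) - (a - t1))
      + ((1 - l1) * l2) * ((f2 + r2) - (a - t2)) by ring.
  by rewrite !addr_ge0 // !mulr_ge0 // subr_ge0.
Qed.


Lemma phi_bound n p1 p2 (A : nat -> 'M[R]_n) (C1 : 'M[R]_(p1, n)) (C2 : 'M[R]_(p2, n))
  (Q : 'M[R]_n) (Rm : 'M[R]_(p1 + p2)) l1 l2 k K K1 K2 X Pb (al : R) :
  (forall x, 0 <= qf Q x) -> (forall x, 0 <= qf Rm x) ->
  (forall x, 0 <= qf (ulsubmx Rm) x) -> (forall x, 0 <= qf (drsubmx Rm) x) ->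
  0 <= l1 <= 1 -> 0 <= l2 <= 1 -> 1 <= al ->
  (forall y, qf X y <= al * qf Pb y) ->
  (forall x, qf (phiEKF A C1 C2 Q Rm l1 l2 k K K1 K2 Pb) x <= qf Pb x) ->
  forall x, qf (phiEKF A C1 C2 Q Rm l1 l2 k K K1 K2 X) x <= al * qf Pb x.
Proof.
move=> hQ hR h1 h2 /andP[l10 l11] /andP[l20 l21] hal hX hP x.
have := hP x; rewrite !phi_qf.
set P0 := qf Pb ((A k)^T *m x).
set P1 := qf Pb ((A k + K *m col_mx C1 C2)^T *m x).
set P2 := qf Pb ((A k + K1 *m C1)^T *m x).
set P3 := qf Pb ((A k + K2 *m C2)^T *m x).
set qq := qf Q x.
set r0 := qf Rm (K^T *m x).
set r1 := qf (ulsubmx Rm) (K1^T *m x).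
set r2 := qf (drsubmx Rm) (K2^T *m x).
set PP := qf Pb x.
move=> hphi.
have w0 : 0 <= 1 - l1 by rewrite subr_ge0.
have w1 : 0 <= 1 - l2 by rewrite subr_ge0.
have hq : 0 <= qq := hQ x.
have hr0 : 0 <= r0 := hR _.
have hr1 : 0 <= r1 := h1 _.
have hr2 : 0 <= r2 := h2 _.
apply: (@le_trans _ _ ((1 - l1) * (1 - l2) * (al * P0 + qq) + l1 * l2 * (al * P1 + qq + r0) +
   l1 * (1 - l2) * (al * P2 + qq + r1) + (1 - l1) * l2 * (al * P3 + qq + r2))).
  by rewrite !lerD // ler_wpM2l ?mulr_ge0 // ?lerD ?hX.
have -> : (1 - l1) * (1 - l2) * (al * P0 + qq) + l1 * l2 * (al * P1 + qq + r0) +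
   l1 * (1 - l2) * (al * P2 + qq + r1) + (1 - l1) * l2 * (al * P3 + qq + r2) =
   al * ((1 - l1) * (1 - l2) * (P0 + qq) + l1 * l2 * (P1 + qq + r0) +
   l1 * (1 - l2) * (P2 + qq + r1) + (1 - l1) * l2 * (P3 + qq + r2))
   - (al - 1) * ((1 - l1) * (1 - l2) * qq + l1 * l2 * (qq + r0) +
   l1 * (1 - l2) * (qq + r1) + (1 - l1) * l2 * (qq + r2)) by ring.
rewrite -[X in _ <= X]subr0; apply: lerB.
  by rewrite ler_wpM2l // (le_trans ler01 hal).
apply: mulr_ge0; first by rewrite subr_ge0.
by repeat (assumption || apply: mulr_ge0 || apply: addr_ge0).
Qed.

End M.
Section B.
Variable R : realType.

Lemma sq_le_sum n (x : 'cV[R]_n) i : x i 0 ^+ 2 <= \sum_k x k 0 ^+ 2.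
Proof. by rewrite (bigD1 i) //= lerDl sumr_ge0 // => k _; exact: sqr_ge0. Qed.

Lemma qf_expand n (M : 'M[R]_n) x : qf M x = \sum_j \sum_i (x i 0 * M i j * x j 0).
Proof.
rewrite /qf /bf mxE; apply: eq_bigr => j _; rewrite mxE big_distrl.
by apply: eq_bigr => i _; rewrite mxE.
Qed.

Lemma qf_upper n (M : 'M[R]_n) x :
  qf M x <= (\sum_j \sum_i `|M i j|) * \sum_k x k 0 ^+ 2.
Proof.
rewrite qf_expand big_distrl; apply: ler_sum => j _; rewrite big_distrl.
apply: ler_sum => i _ /=.
have h1 := sq_le_sum x i; have h2 := sq_le_sum x j.
set S := \sum_k x k 0 ^+ 2 in h1 h2 *.
have hn : `|x i 0 * x j 0| <= S.
  rewrite ler_norml; apply/andP; split; nra.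
have -> : x i 0 * M i j * x j 0 = M i j * (x i 0 * x j 0) by ring.
apply: le_trans (ler_norm _) _; rewrite normrM.
by apply: ler_wpM2l.
Qed.

Lemma cs n (Pb : 'M[R]_n) u x : Pb^T = Pb -> (forall y, 0 <= qf Pb y) -> 0 < qf Pb u ->
  bf Pb u x ^+ 2 <= qf Pb u * qf Pb x.
Proof.
move=> hs hp ha.
have := hp (qf Pb u *: x + (- bf Pb u x) *: u).
rewrite /qf !bfDl !bfDr !bfZl !bfZr (bfC x u hs) -/(qf Pb u) -/(qf Pb x).
set a := qf Pb u; set b := bf Pb u x; set c := qf Pb x.
move=> h.
have : 0 <= a * (a * c - b ^+ 2).
  have -> : a * (a * c - b ^+ 2) = a * (a * c) + a * (- b * b) + (- b * (a * b) + - b * (- b * a)) by ring.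
  exact: h.
by rewrite pmulr_rge0 // subr_ge0.
Qed.


Lemma bound_by_pd n (M Pb : 'M[R]_n) : Pb^T = Pb -> (forall x, x != 0 -> 0 < qf Pb x) ->
  exists al, 0 <= al /\ forall x, qf M x <= al * qf Pb x.
Proof.
move=> hs hp; have hu := pd_unit hp; have hpp := pd_psd hp.
pose u i := invmx Pb *m delta_mx i (0 : 'I_1).
have hPu i : Pb *m u i = delta_mx i 0 by rewrite /u mulKVmx.
have hb i x : bf Pb (u i) x = x i 0.
  have e : (u i)^T *m Pb = delta_mx 0 i.
    by rewrite -[X in _ *m X]hs -trmx_mul hPu trmx_delta.
  by rewrite /bf e -rowE mxE.
have hpos i : 0 < qf Pb (u i).
  apply: hp; apply/eqP => h0; have := hPu i; rewrite h0 mulmx0.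
  move/(congr1 (fun N : 'M[R]_(n, 1) => N i 0)); rewrite !mxE !eqxx /=.
  by move/eqP; rewrite eq_sym oner_eq0.
exists ((\sum_j \sum_i `|M i j|) * \sum_i qf Pb (u i)); split.
  by rewrite mulr_ge0 // sumr_ge0 // => i _; rewrite sumr_ge0.
move=> x; apply: le_trans (qf_upper M x) _; rewrite -mulrA ler_wpM2l //.
  by rewrite sumr_ge0 // => j _; rewrite sumr_ge0.
rewrite big_distrl; apply: ler_sum => i _ /=; rewrite -(hb i x); exact: cs.
Qed.

Lemma entry_bound n (M Pb : 'M[R]_n) al i j : M^T = M -> (forall y, 0 <= qf M y) ->
  (forall y, qf M y <= al * qf Pb y) ->
  `|M i j| <= al * (qf Pb (delta_mx i 0 + delta_mx j 0) + qf Pb (delta_mx i 0) + qf Pb (delta_mx j 0)).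
Proof.
move=> hM hp hb.
have hij : M j i = M i j by rewrite -{1}hM mxE.
have e1 : qf M (delta_mx i 0 + delta_mx j 0) = M i i + M i j + (M j i + M j j).
  by rewrite /qf bfDl !bfDr !bf_delta.
have e2 : qf M (delta_mx i 0) = M i i by rewrite /qf bf_delta.
have e3 : qf M (delta_mx j 0) = M j j by rewrite /qf bf_delta.
have := hb (delta_mx i 0 + delta_mx j 0); have := hb (delta_mx i 0); have := hb (delta_mx j 0).
have := hp (delta_mx i 0 + delta_mx j 0); have := hp (delta_mx i 0); have := hp (delta_mx j 0).
rewrite e1 e2 e3 hij => *.
rewrite ler_norml; apply/andP; split; lra.
Qed.

Lemma single_le_sum n (F : 'I_n -> 'I_n -> R) i j : (forall i j, 0 <= F i j) ->
  F i j <= \sum_i \sum_j F i j.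
Proof.
move=> h; rewrite (bigD1 i) //= (bigD1 j) //= -addrA lerDl addr_ge0 //.
  by rewrite sumr_ge0.
by rewrite sumr_ge0 // => k _; rewrite sumr_ge0.
Qed.

End B.
Theorem lemma2 (R : realType) (n p1 p2 : nat)
  (hn : (0 < n)%N) (hp1 : (0 < p1)%N) (hp2 : (0 < p2)%N)
  (A : nat -> 'M[R]_n) (C1 : 'M[R]_(p1, n)) (C2 : 'M[R]_(p2, n))
  (Q : 'M[R]_n) (Rm : 'M[R]_(p1 + p2))
  (hQ : pdmx Q) (hR : pdmx Rm)
  (l1 l2 : R) (hl1 : 0 <= l1 <= 1) (hl2 : 0 <= l2 <= 1)
  (Kg : nat -> 'M[R]_(n, p1 + p2)) (Kg1 : nat -> 'M[R]_(n, p1))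
  (Kg2 : nat -> 'M[R]_(n, p2)) (Pbar : 'M[R]_n)
  (hPbar : pdmx Pbar)
  (hphi : forall k : nat,
      loewner_gt Pbar (phiEKF A C1 C2 Q Rm l1 l2 k (Kg k) (Kg1 k) (Kg2 k) Pbar))
  (P : nat -> 'M[R]_n)
  (hP0 : psdmx (P 0%N))
  (hrec : forall k : nat, P k.+1 = gEKF A C1 C2 Q Rm l1 l2 k (P k)) :
  exists c : R, forall (k : nat) (i j : 'I_n), `|P k i j| <= c.
Proof.
move: hQ hR hPbar hP0 => [hQs hQd] [hRs hRd] [hPs hPd] [h0s h0p].
have hQp : forall x, 0 <= qf Q x := pd_psd hQd.
have hRp : forall x, 0 <= qf Rm x := pd_psd hRd.
have hPbp : forall x, 0 <= qf Pbar x := pd_psd hPd.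
have [h11s h11d] := ul_pd hRs hRd.
have [h22s h22d] := dr_pd hRs hRd.
have [a0 [a0ge hb0]] := bound_by_pd (P 0%N) hPs hPd.
pose al := 1 + a0.
have hal : 1 <= al by rewrite /al lerDl.
have hphi' k x : qf (phiEKF A C1 C2 Q Rm l1 l2 k (Kg k) (Kg1 k) (Kg2 k) Pbar) x <= qf Pbar x.
  have [_ h] := hphi k.
  have [->|x0] := eqVneq x 0; first by rewrite !qf0.
  have h' : 0 < qf (Pbar - phiEKF A C1 C2 Q Rm l1 l2 k (Kg k) (Kg1 k) (Kg2 k) Pbar) x := h x x0.
  by move: h'; rewrite qfBm subr_gt0 => /ltW.
have inv : forall k, [/\ (P k)^T = P k, forall y, 0 <= qf (P k) y &
                         forall y, qf (P k) y <= al * qf Pbar y].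
  elim=> [|k [hs hp hb]].
    split => // y; apply: le_trans (hb0 y) _; rewrite ler_wpM2r //.
    by rewrite /al lerDr.
  rewrite hrec.
  have [gs gp gh] := g_bounds A C1 C2 k hQs hQp hRs hRd hl1 hl2 hs hp.
  split => // y; apply: le_trans (gh (Kg k) (Kg1 k) (Kg2 k) y) _.
  by apply: phi_bound => //; [exact: pd_psd h11d | exact: pd_psd h22d].
pose c := al * \sum_i \sum_j (qf Pbar (delta_mx i 0 + delta_mx j 0)
              + qf Pbar (delta_mx i 0) + qf Pbar (delta_mx j 0)).
exists c => k i j.
have [hs hp hb] := inv k.
apply: le_trans (entry_bound i j hs hp hb) _.
rewrite ler_wpM2l //; first by rewrite (le_trans ler01 hal).
apply: (single_le_sum (F := fun i j => qf Pbar (delta_mx i 0 + delta_mx j 0)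
              + qf Pbar (delta_mx i 0) + qf Pbar (delta_mx j 0))) => i' j'.
by rewrite !addr_ge0.
Qed.
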